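(* There exist $\delta_1>0$ and $C_1>0$ such that for every $(\ell,\xi)\in[-\delta_1,\delta_1]\times[-\delta_1,\delta_1]$, $|\lambda^+_{0,\ell,\xi}-\lambda^+_{-1,\ell,\xi}|\ge C_1|(\ell,\xi)|$ and $|\lambda^-_{0,\ell,\xi}-\lambda^-_{1,\ell,\xi}|\ge C_1|(\ell,\xi)|$, and for every $n\in\mathbb Z$ and sign $\#\in\{+,-\}$ with $(n,\#)\notin\{(0,+),(0,-),(1,-),(-1,+)\}$, $|\lambda^\#_{n,\ell,\xi}|\ge C_1$.
   Context: Fix $\kappa>0$ and set $\mu_0:=\kappa/\tanh(\kappa)$. Let $F:\mathbb R\to\mathbb R$ be the odd analytic function with $F(r)=\sqrt{r\tanh r}$ for $r\ge0$. For $n\in\mathbb Z$ and $(\ell,\xi)\in\mathbb R^2$ set $|n\kappa|_{\ell,\xi}:=\sqrt{(n\kappa+\xi)^2+\ell^2}$ and $\lambda^\pm_{n,\ell,\xi}:=i\big(n\kappa+\xi\pm\sqrt{\mu_0}\,F(|n\kappa|_{\ell,\xi})\big)$; these are the eigenvalues of $\begin{pmatrix} i(n\kappa+\xi) & F(|n\kappa|_{\ell,\xi})^2\\ -\mu_0 & i(n\kappa+\xi)\end{pmatrix}$. Here $|(\ell,\xi)|=\sqrt{\ell^2+\xi^2}$. *)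

(* Defs.v *)
From Stdlib Require Import Reals Lra ZArith.
From Coquelicot Require Import Coquelicot.
Open Scope R_scope.

Definition mu0 (kappa : R) : R := kappa / tanh kappa.

Definition F (r : R) : R :=
  if Rle_dec 0 r then sqrt (r * tanh r) else - sqrt ((- r) * tanh (- r)).

Definition nk_norm (kappa : R) (n : Z) (l xi : R) : R :=
  sqrt ((IZR n * kappa + xi) ^ 2 + l ^ 2).

Definition lam (kappa : R) (s : bool) (n : Z) (l xi : R) : C :=
  (0, IZR n * kappa + xi
       + (if s then 1 else -1) * sqrt (mu0 kappa) * F (nk_norm kappa n l xi)).

Definition pnorm (l xi : R) : R := sqrt (l ^ 2 + xi ^ 2).

Definition excluded (n : Z) (s : bool) : Prop :=
  n = 0%Z \/ (n = 1%Z /\ s = false) \/ (n = (-1)%Z /\ s = true).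

(* Main.v *)
Require Import Defs.
From Stdlib Require Import Reals ZArith Lra Psatz Lia.
From Coquelicot Require Import Coquelicot.
Open Scope R_scope.

Lemma div_le a b c d : 0 < b -> 0 < d -> a * d <= c * b -> a / b <= c / d.
Proof.
  intros hb hd h.
  assert (E : c / d - a / b = (c * b - a * d) * / (b * d)) by (field; lra).
  assert (0 < / (b * d)) by (apply Rinv_0_lt_compat; nra).
  assert (0 <= (c * b - a * d) * / (b * d)) by nra. lra.
Qed.

Lemma cosh_pos x : 0 < cosh x.
Proof. unfold cosh. pose proof (exp_pos x). pose proof (exp_pos (-x)). lra. Qed.

Lemma tanh_exp x : tanh x = (exp (2*x) - 1)/(exp (2*x) + 1).
Proof.
  unfold tanh, sinh, cosh.
  replace (2*x) with (x + x) by ring. rewrite exp_plus, exp_Ropp.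
  pose proof (exp_pos x).
  field. split; [nra | lra].
Qed.

Lemma phi_mono u v : 0 < u -> u <= v -> (u-1)/(u+1) <= (v-1)/(v+1).
Proof. intros. apply div_le; nra. Qed.

Lemma tanh_mono x y : x <= y -> tanh x <= tanh y.
Proof.
  intros h. rewrite !tanh_exp. apply phi_mono. apply exp_pos.
  destruct (Rle_lt_or_eq_dec _ _ h) as [h'|h'].
  - left. apply exp_increasing. lra.
  - subst; lra.
Qed.

Lemma tanh_0 : tanh 0 = 0.
Proof. rewrite tanh_exp. rewrite Rmult_0_r, exp_0. field. Qed.

Lemma tanh_nonneg x : 0 <= x -> 0 <= tanh x.
Proof. intros. rewrite <- tanh_0. now apply tanh_mono. Qed.

Lemma tanh_lt1 x : tanh x < 1.
Proof.
  rewrite tanh_exp. pose proof (exp_pos (2*x)).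
  apply Rlt_le_trans with ((exp (2*x))/(exp(2*x)+1)).
  - unfold Rdiv. apply Rmult_lt_compat_r. apply Rinv_0_lt_compat. lra. lra.
  - assert (exp (2 * x) / (exp (2 * x) + 1) <= 1/1) by (apply div_le; lra). lra.
Qed.

Lemma tanh_plus x y :
  tanh (x+y) = (tanh x + tanh y)/(1 + tanh x * tanh y).
Proof.
  rewrite !tanh_exp. replace (2*(x+y)) with (2*x + 2*y) by ring.
  rewrite exp_plus.
  pose proof (exp_pos (2*x)). pose proof (exp_pos (2*y)).
  set (u := exp (2*x)) in *. set (v := exp (2*y)) in *.
  assert (E : 1 + (u - 1) / (u + 1) * ((v - 1) / (v + 1)) = 2*(u*v+1)/((u+1)*(v+1))) by (field; lra).
  rewrite E. field. repeat split; nra.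
Qed.

Lemma tanh_lb x : 0 <= x -> x/(1+x) <= tanh x.
Proof.
  intros hx. rewrite tanh_exp. pose proof (exp_ineq1_le (2*x)).
  apply div_le; nra.
Qed.

Lemma sinh_pos x : 0 < x -> 0 < sinh x.
Proof. intros. rewrite <- sinh_0. now apply sinh_lt. Qed.

Lemma sinh_gt x : 0 < x -> x < sinh x.
Proof.
  intros hx.
  destruct (MVT_cor2 (sinh - id)%F (fun c => cosh c - 1) 0 x hx) as [c [E hc]].
  { intros c _. apply derivable_pt_lim_minus. apply derivable_pt_lim_sinh. apply derivable_pt_lim_id. }
  unfold minus_fct, id in E. rewrite sinh_0 in E.
  assert (1 < cosh c).
  { unfold cosh. rewrite exp_Ropp. pose proof (exp_ineq1 c ltac:(lra)).
    pose proof (exp_pos c).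
    assert (exp c + / exp c - 2 = (exp c - 1)^2 / exp c) by (field; lra).
    assert (0 < (exp c - 1)^2 / exp c). { apply Rdiv_lt_0_compat; nra. }
    lra. }
  nra.
Qed.

Lemma tanh_lt x : 0 < x -> tanh x < x.
Proof.
  intros hx.
  destruct (MVT_cor2 ((id * cosh) - sinh)%F (fun c => 1 * cosh c + c * sinh c - cosh c) 0 x hx) as [c [E hc]].
  { intros c _. apply derivable_pt_lim_minus. apply derivable_pt_lim_mult.
    apply derivable_pt_lim_id. apply derivable_pt_lim_cosh. apply derivable_pt_lim_sinh. }
  unfold minus_fct, mult_fct, id in E. rewrite sinh_0 in E.
  pose proof (sinh_pos c ltac:(lra)).
  pose proof (cosh_pos x).
  assert (H3 : x * cosh x - sinh x = (1 * cosh c + c * sinh c - cosh c) * (x - 0)) by (rewrite <- E; ring).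
  assert (0 < (1 * cosh c + c * sinh c - cosh c) * (x - 0)).
  { replace ((1 * cosh c + c * sinh c - cosh c) * (x - 0)) with ((c * sinh c) * x) by ring.
    apply Rmult_lt_0_compat; [apply Rmult_lt_0_compat|]; lra. }
  assert (sinh x < x * cosh x) by lra.
  unfold tanh. apply Rlt_le_trans with (x * cosh x / cosh x).
  - unfold Rdiv. apply Rmult_lt_compat_r. now apply Rinv_0_lt_compat. lra.
  - right. field. lra.
Qed.

Lemma tanh_le x : 0 <= x -> tanh x <= x.
Proof. intros [h|h]. apply Rlt_le; now apply tanh_lt. subst; rewrite tanh_0; lra. Qed.

Lemma le_of_sq a b : 0 <= a -> 0 <= b -> a^2 <= b^2 -> a <= b.
Proof. intros. nra. Qed.

Section K.
Variable k : R.
Hypothesis hk : 0 < k.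
Variable t : R.
Hypothesis ht : t = tanh k.

Lemma t_pos : 0 < t.
Proof. pose proof (tanh_lb k ltac:(lra)). rewrite ht.
  assert (0 < k/(1+k)) by (apply Rdiv_lt_0_compat; lra). lra. Qed.
Lemma t_lt1 : t < 1. Proof. rewrite ht; apply tanh_lt1. Qed.
Lemma t_lt_k : t < k. Proof. rewrite ht; now apply tanh_lt. Qed.

Lemma gam_lt1 : k * (1 - t^2) < t.
Proof.
  pose proof (sinh_gt (2*k) ltac:(lra)) as H.
  unfold sinh in H. rewrite exp_Ropp in H.
  rewrite ht, tanh_exp.
  pose proof (exp_pos (2*k)). set (u := exp (2*k)) in *.
  assert (4*k*u < u*u - 1).
  { assert (4*k < u - /u) by lra.
    assert (u * (4*k) < u * (u - /u)) by (apply Rmult_lt_compat_l; lra).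
    assert (u * (u - /u) = u*u - 1) by (field; lra). nra. }
  assert (E : (u - 1) / (u + 1) - k * (1 - ((u - 1) / (u + 1))^2) = (u*u - 1 - 4*k*u) * /((u+1)^2)) by (field; lra).
  assert (0 < /((u+1)^2)) by (apply Rinv_0_lt_compat; nra).
  assert (0 < (u*u - 1 - 4*k*u) * /((u+1)^2)) by (apply Rmult_lt_0_compat; lra).
  lra.
Qed.

Lemma mu0_eq : mu0 k = k / t.
Proof. rewrite ht; reflexivity. Qed.

Definition G (r : R) := sqrt (mu0 k) * F r.

Lemma G_facts r : 0 <= r -> 0 <= G r /\ (G r)^2 = k / t * (r * tanh r).
Proof.
  intros hr. pose proof t_pos. pose proof (tanh_nonneg r hr).
  unfold G, F. destruct (Rle_dec 0 r) as [_|n]; [|lra].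
  assert (0 < mu0 k) by (rewrite mu0_eq; apply Rdiv_lt_0_compat; lra).
  split.
  - apply Rmult_le_pos; apply sqrt_pos.
  - rewrite Rpow_mult_distr, !pow2_sqrt, mu0_eq; [reflexivity | nra | lra].
Qed.

Lemma P1 r : 0 <= r <= 1 -> r * (1 - r) <= G r.
Proof.
  intros hr. destruct (G_facts r ltac:(lra)) as [g0 g2].
  apply le_of_sq; [nra|lra|].
  rewrite g2. pose proof (tanh_lb r ltac:(lra)) as hl.
  pose proof t_pos. pose proof t_lt_k. pose proof (tanh_nonneg r ltac:(lra)).
  assert (hl' : r <= tanh r * (1 + r)).
  { assert (r / (1+r) * (1+r) = r) by (field; lra). nra. }
  assert (h1 : r * tanh r <= k / t * (r * tanh r)).
  { assert (1 <= k / t). { assert (k / t - 1 = (k - t)/t) by (field; lra).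
      assert (0 < (k-t)/t) by (apply Rdiv_lt_0_compat; lra). lra. }
    nra. }
  assert (h2 : (r * (1 - r))^2 * (1 + r) <= r * tanh r * (1 + r)).
  { assert ((1 + r) * (1 - r)^2 <= 1) by nra. nra. }
  assert ((r * (1 - r))^2 <= r * tanh r) by nra. lra.
Qed.

Lemma tanh_sub a b : 0 <= a -> 0 <= b -> tanh (a + b) <= tanh a + tanh b.
Proof.
  intros. rewrite tanh_plus. pose proof (tanh_nonneg a H). pose proof (tanh_nonneg b H0).
  replace (tanh a + tanh b) with ((tanh a + tanh b)/1) at 2 by field.
  apply div_le; nra.
Qed.

Lemma tanh_kr r : 0 <= r -> tanh (k + r) <= t + (1 - t^2) * r.
Proof.
  intros hr. rewrite tanh_plus, <- ht.
  pose proof t_pos. pose proof t_lt1. pose proof (tanh_nonneg r hr). pose proof (tanh_le r hr).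
  pose proof (tanh_lt1 r).
  apply Rle_trans with (t + (1 - t^2) * tanh r).
  - replace (t + (1 - t^2) * tanh r) with ((t + (1 - t^2) * tanh r)/1) by field.
    assert (0 <= (1 - t^2) * t * (tanh r)^2) by (apply Rmult_le_pos; [apply Rmult_le_pos|]; nra).
    apply div_le; try nra.
  - apply Rplus_le_compat_l. apply Rmult_le_compat_l; nra.
Qed.

Definition gam := k * (1 - t^2) / t.
Definition bet := (1 + gam) / 2.

Lemma gam_bounds : 0 < gam < 1.
Proof.
  pose proof t_pos. pose proof t_lt1. pose proof gam_lt1. unfold gam. split.
  - apply Rdiv_lt_0_compat; [apply Rmult_lt_0_compat|]; nra.
  - assert (k * (1 - t^2) / t = 1 - (t - k * (1 - t^2))/t) by (field; lra).
    assert (0 < (t - k * (1 - t^2))/t) by (apply Rdiv_lt_0_compat; lra). lra.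
Qed.

Lemma P2 r rho : 0 <= r -> 0 <= rho <= k + r -> G rho <= k + bet * r.
Proof.
  intros hr hrho. destruct (G_facts rho ltac:(lra)) as [g0 g2].
  pose proof gam_bounds. unfold bet.
  apply le_of_sq; [lra|nra|].
  rewrite g2.
  pose proof (tanh_mono rho (k+r) ltac:(lra)). pose proof (tanh_kr r hr).
  pose proof (tanh_nonneg rho ltac:(lra)). pose proof t_pos. pose proof t_lt1.
  assert (h1 : rho * tanh rho <= (k + r) * (t + (1 - t^2) * r)) by nra.
  assert (h2 : k / t * (rho * tanh rho) <= k / t * ((k + r) * (t + (1 - t^2) * r))).
  { apply Rmult_le_compat_l; [|exact h1]. apply Rlt_le, Rdiv_lt_0_compat; lra. }
  assert (E : k / t * ((k + r) * (t + (1 - t^2) * r)) = (k + r) * (k + gam * r)) by (unfold gam; field; lra).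
  rewrite E in h2.
  assert ((k + (1 + gam) / 2 * r)^2 - (k + r) * (k + gam * r) = ((1 - gam) * r / 2)^2) by field.
  pose proof (pow2_ge_0 ((1 - gam) * r / 2)).
  lra.
Qed.


Definition eps0 := 2 * t^3 / (1 + t^2).
Definition e0 := k * eps0 / (2 * t).

Lemma eps0_pos : 0 < eps0.
Proof. pose proof t_pos. pose proof (pow2_ge_0 t). unfold eps0. apply Rdiv_lt_0_compat; [|lra].
  apply Rmult_lt_0_compat; [lra | apply pow_lt; lra]. Qed.
Lemma e0_pos : 0 < e0.
Proof. pose proof t_pos. pose proof eps0_pos. unfold e0. apply Rdiv_lt_0_compat; [apply Rmult_lt_0_compat|]; lra. Qed.

Lemma tanh_2k : tanh (2 * k) = 2 * t - eps0.
Proof.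
  replace (2 * k) with (k + k) by ring. rewrite tanh_plus, <- ht. unfold eps0.
  pose proof t_pos. field. nra.
Qed.

Lemma T_mult n : tanh ((INR n + 2) * k) <= (INR n + 2) * t - eps0.
Proof.
  induction n as [|n IH].
  - simpl. rewrite Rplus_0_l, tanh_2k. lra.
  - rewrite S_INR. replace ((INR n + 1 + 2) * k) with ((INR n + 2) * k + k) by ring.
    pose proof (pos_INR n).
    pose proof (tanh_sub ((INR n + 2) * k) k ltac:(nra) ltac:(lra)). rewrite <- ht in H0. lra.
Qed.

Lemma core m A l d : 2 <= m -> tanh (m * k) <= m * t - eps0 ->
  0 <= d -> d <= eps0 / 4 -> d <= e0 / 8 -> d <= k / 2 ->
  m * k - d <= A <= m * k + d -> -d <= l <= d ->
  G (sqrt (A^2 + l^2)) <= A - e0 / 8.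
Proof.
  intros hm hT hd0 hd1 hd2 hd3 hA hl.
  pose proof t_pos. pose proof eps0_pos. pose proof e0_pos.
  assert (hmk : 2 * k <= m * k) by nra.
  assert (A0 : 0 <= A) by lra.
  set (rho := sqrt (A^2 + l^2)).
  assert (r0 : 0 <= rho) by apply sqrt_pos.
  assert (r1 : rho <= A + d).
  { apply le_of_sq; [lra|lra|]. unfold rho. rewrite pow2_sqrt by nra. nra. }
  assert (T1 : tanh rho <= m * t - eps0 / 2).
  { apply Rle_trans with (tanh (m * k + 2 * d)). apply tanh_mono; lra.
    apply Rle_trans with (tanh (m * k) + tanh (2 * d)). apply tanh_sub; nra.
    pose proof (tanh_le (2 * d) ltac:(lra)). lra. }
  destruct (G_facts rho r0) as [g0 g2].
  pose proof (tanh_nonneg rho r0).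
  assert (h1 : rho * tanh rho <= (m * k + 2 * d) * (m * t - eps0 / 2)).
  { apply Rle_trans with ((m * k + 2 * d) * tanh rho). apply Rmult_le_compat_r; lra.
    apply Rmult_le_compat_l; lra. }
  assert (h2 : k / t * (rho * tanh rho) <= k / t * ((m * k + 2 * d) * (m * t - eps0 / 2))).
  { apply Rmult_le_compat_l; [|exact h1]. apply Rlt_le, Rdiv_lt_0_compat; lra. }
  assert (E : k / t * ((m * k + 2 * d) * (m * t - eps0 / 2)) = (m * k + 2 * d) * (m * k - e0)) by (unfold e0; field; lra).
  rewrite E, <- g2 in h2.
  set (Gv := G rho) in *.
  assert (h3 : A^2 - Gv^2 >= m * k * e0 / 2).
  { assert (A^2 >= (m*k - d)^2) by nra.
    assert (m * k * (e0 - 4 * d) >= m * k * e0 / 2) by nra.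
    nra. }
  assert (h4 : Gv <= A) by (apply le_of_sq; nra).
  assert (h5 : (A - Gv) * (4 * m * k) >= (A - Gv) * (A + Gv)) by nra.
  assert (h6 : (A - Gv) * (4 * m * k) >= e0 / 8 * (4 * m * k)) by nra.
  assert (h7 : e0 / 8 <= A - Gv).
  { apply Rnot_lt_le. intro hc. assert ((A - Gv) * (4 * m * k) < e0 / 8 * (4 * m * k)).
    apply Rmult_lt_compat_r; nra. lra. }
  lra.
Qed.

End K.

Lemma Cmod_0y a : Cmod (0, a) = Rabs a.
Proof. unfold Cmod. simpl. rewrite <- sqrt_Rsqr_abs. f_equal. unfold Rsqr. ring. Qed.

Lemma Cmod_diff a b : Cmod ((0, a) - (0, b))%C = Rabs (a - b).
Proof. unfold Cminus, Cplus, Copp. simpl. rewrite <- Cmod_0y. f_equal. f_equal; ring. Qed.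

Lemma pos_nat p : p <> 1%positive -> exists j, IZR (Zpos p) = INR j + 2.
Proof.
  intros hp. exists (Pos.to_nat p - 2)%nat.
  change (IZR (Zpos p)) with (IPR p). rewrite <- INR_IPR.
  assert (Pos.to_nat p <> 1%nat). { intro h. apply hp. apply Pos2Nat.inj. rewrite h. reflexivity. }
  pose proof (Pos2Nat.is_pos p).
  replace (Pos.to_nat p) with ((Pos.to_nat p - 2) + 2)%nat at 1 by lia.
  rewrite plus_INR. simpl. ring.
Qed.

Lemma abs_sg a g (s : bool) : 0 <= g -> Rabs (a + (if s then 1 else -1) * g) >= Rabs a - g.
Proof.
  intros hg. destruct s.
  - pose proof (Rabs_triang_inv a (-g)). rewrite Rabs_Ropp, (Rabs_pos_eq g) in H by lra.
    replace (a - - g) with (a + 1 * g) in H by ring. lra.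
  - pose proof (Rabs_triang_inv a g). rewrite (Rabs_pos_eq g) in H by lra.
    replace (a - g) with (a + -1 * g) in H by ring. lra.
Qed.

Theorem lemma3p3 (kappa : R) (hk : 0 < kappa) :
  exists delta1 C1 : R, 0 < delta1 /\ 0 < C1 /\
  forall l xi : R, -delta1 <= l <= delta1 -> -delta1 <= xi <= delta1 ->
    Cmod (lam kappa true 0 l xi - lam kappa true (-1) l xi) >= C1 * pnorm l xi /\
    Cmod (lam kappa false 0 l xi - lam kappa false 1 l xi) >= C1 * pnorm l xi /\
    (forall (n : Z) (s : bool), ~ excluded n s -> Cmod (lam kappa s n l xi) >= C1).
Proof.
  assert (ht : exists t, t = tanh kappa) by eauto. destruct ht as [t ht].
  pose proof (gam_bounds kappa hk t ht) as hg.
  pose proof (eps0_pos kappa hk t ht) as he.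
  pose proof (e0_pos kappa hk t ht) as he0.
  set (b := bet kappa t) in *.
  assert (hb : 1/2 < b < 1) by (unfold b, bet; lra).
  set (ep := eps0 t) in *. set (e := e0 kappa t) in *.
  set (d := Rmin (kappa/2) (Rmin ((1 - b)/4) (Rmin (ep/4) (e/8)))).
  set (C1 := Rmin ((1 - b)/2) (Rmin (kappa/2) (e/8))).
  assert (d1 : d <= kappa/2) by apply Rmin_l.
  assert (d2 : d <= (1-b)/4) by (eapply Rle_trans; [apply Rmin_r|apply Rmin_l]).
  assert (d3 : d <= ep/4) by (eapply Rle_trans; [apply Rmin_r|]; eapply Rle_trans; [apply Rmin_r|apply Rmin_l]).
  assert (d4 : d <= e/8) by (eapply Rle_trans; [apply Rmin_r|]; eapply Rle_trans; [apply Rmin_r|apply Rmin_r]).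
  assert (dpos : 0 < d).
  { unfold d. repeat apply Rmin_pos; lra. }
  assert (c1 : C1 <= (1-b)/2) by apply Rmin_l.
  assert (c2 : C1 <= kappa/2) by (eapply Rle_trans; [apply Rmin_r|apply Rmin_l]).
  assert (c3 : C1 <= e/8) by (eapply Rle_trans; [apply Rmin_r|apply Rmin_r]).
  assert (cpos : 0 < C1).
  { unfold C1. repeat apply Rmin_pos; lra. }
  exists d, C1. split; [exact dpos|]. split; [exact cpos|].
  intros l xi hl hxi.
  set (r := pnorm l xi).
  assert (r0 : 0 <= r) by apply sqrt_pos.
  assert (r2 : r^2 = l^2 + xi^2) by (unfold r, pnorm; rewrite pow2_sqrt; nra).
  assert (r1 : r <= 2 * d) by (apply le_of_sq; nra).
  assert (rx1 : xi <= r) by (destruct (Rle_lt_dec xi 0); [lra|apply le_of_sq; nra]).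
  assert (rx2 : - xi <= r) by (destruct (Rle_lt_dec xi 0); [apply le_of_sq; nra|lra]).
  assert (nk0 : nk_norm kappa 0 l xi = r).
  { unfold nk_norm, r, pnorm. f_equal. simpl. ring. }
  assert (hP1 : r * (1 - r) <= G kappa r) by (apply (P1 kappa hk t ht); lra).
  split; [|split].
  - unfold lam. rewrite Cmod_diff, nk0.
    set (rho := nk_norm kappa (-1) l xi).
    assert (rh0 : 0 <= rho) by apply sqrt_pos.
    assert (rh1 : rho <= kappa + r).
    { apply le_of_sq; [lra|lra|]. unfold rho, nk_norm. rewrite pow2_sqrt by nra.
      replace (IZR (-1)) with (-1) by reflexivity. nra. }
    pose proof (P2 kappa hk t ht r rho r0 (conj rh0 rh1)) as hP2. fold b in hP2.
    unfold G in hP1, hP2.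
    match goal with |- Rabs ?y >= _ => assert (hy : y >= C1 * r) end.
    { replace (IZR 0) with 0 by reflexivity. replace (IZR (-1)) with (-1) by reflexivity.
      assert (r * (1 - b - r) >= r * ((1 - b)/2)) by nra.
      assert (C1 * r <= (1 - b)/2 * r) by nra.
      nra. }
    pose proof (Rle_abs (0 * kappa + xi + 1 * sqrt (mu0 kappa) * F r -
      (-1 * kappa + xi + 1 * sqrt (mu0 kappa) * F rho))).
    replace (IZR 0) with 0 by reflexivity. replace (IZR (-1)) with (-1) by reflexivity. lra.
  - unfold lam. rewrite Cmod_diff, nk0.
    set (rho := nk_norm kappa 1 l xi).
    assert (rh0 : 0 <= rho) by apply sqrt_pos.
    assert (rh1 : rho <= kappa + r).
    { apply le_of_sq; [lra|lra|]. unfold rho, nk_norm. rewrite pow2_sqrt by nra.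
      replace (IZR 1) with 1 by reflexivity. nra. }
    pose proof (P2 kappa hk t ht r rho r0 (conj rh0 rh1)) as hP2. fold b in hP2.
    unfold G in hP1, hP2.
    replace (IZR 0) with 0 by reflexivity. replace (IZR 1) with 1 by reflexivity.
    match goal with |- Rabs ?y >= _ => pose proof (Rabs_Ropp y) as hR; pose proof (Rle_abs (- y)) end.
    assert (r * (1 - b - r) >= r * ((1 - b)/2)) by nra.
    assert (C1 * r <= (1 - b)/2 * r) by nra.
    nra.
  - intros n s hex. unfold lam. rewrite Cmod_0y.
    set (rho := nk_norm kappa n l xi).
    assert (rh0 : 0 <= rho) by apply sqrt_pos.
    destruct (G_facts kappa hk t ht rho rh0) as [g0 _].
    replace ((if s then 1 else -1) * sqrt (mu0 kappa) * F rho) with ((if s then 1 else -1) * G kappa rho)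
      by (unfold G; ring).
    pose proof (abs_sg (IZR n * kappa + xi) (G kappa rho) s g0) as hab.
    destruct n as [|p|p].
    + exfalso. apply hex. left. reflexivity.
    + destruct (Pos.eq_dec p 1) as [->|hp].
      * destruct s; [|exfalso; apply hex; right; left; auto].
        replace (IZR 1) with 1 by reflexivity.
        pose proof (Rle_abs (1 * kappa + xi + 1 * G kappa rho)). nra.
      * destruct (pos_nat p hp) as [j hj].
        pose proof (pos_INR j).
        pose proof (core kappa hk t ht (INR j + 2) (IZR (Zpos p) * kappa + xi) l d ltac:(lra)
           (T_mult kappa hk t ht j) ltac:(lra) d3 d4 d1 ltac:(rewrite hj; nra) hl) as hc.
        fold ep e in hc.
        unfold rho, nk_norm in *.
        match goal with |- Rabs (_ + ?q) >= _ => set (qq := q) in * end.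
        rewrite (Rabs_pos_eq (IZR (Z.pos p) * kappa + xi)) in hab by (rewrite hj; nra).
        lra.
    + change (Zneg p) with (- Zpos p)%Z in *. rewrite opp_IZR in *.
      destruct (Pos.eq_dec p 1) as [->|hp].
      * destruct s; [exfalso; apply hex; right; right; auto|].
        replace (IZR 1) with 1 by reflexivity.
        match goal with |- Rabs ?y >= _ => pose proof (Rabs_Ropp y) as hR; pose proof (Rle_abs (- y)) end.
        cbv iota in *. lra.
      * destruct (pos_nat p hp) as [j hj].
        pose proof (pos_INR j).
        pose proof (core kappa hk t ht (INR j + 2) (IZR (Zpos p) * kappa - xi) l d ltac:(lra)
           (T_mult kappa hk t ht j) ltac:(lra) d3 d4 d1 ltac:(rewrite hj; nra) hl) as hc.
        fold ep e in hc.
        unfold rho, nk_norm in *. try rewrite opp_IZR in *.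
        replace ((- IZR (Z.pos p) * kappa + xi) ^ 2) with ((IZR (Z.pos p) * kappa - xi) ^ 2) in * by ring.
        match goal with |- Rabs (_ + ?q) >= _ => set (qq := q) in * end.
        replace (- IZR (Z.pos p) * kappa + xi) with (- (IZR (Z.pos p) * kappa - xi)) in * by ring.
        rewrite (Rabs_Ropp (IZR (Z.pos p) * kappa - xi)), (Rabs_pos_eq (IZR (Z.pos p) * kappa - xi)) in hab by (rewrite hj; nra).
        lra.
Qed.
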